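(* Let $\mathcal G=(V_{\mathrm{Max}},V_{\mathrm{Min}},T,E,w)$ be any shortest-path game. Then for every vertex $v\in V$, the deterministic value equals the memoryless upper value: $\mathrm{Val}^{\mathrm{d}}(v)=\overline{\mathrm{Val}}^{\mathrm{m}}(v)$ (as elements of $\mathbb Z\cup\{-\infty,+\infty\}$).
   Context: A shortest-path game (SPG) is a tuple $\mathcal G=(V_{\mathrm{Max}},V_{\mathrm{Min}},T,E,w)$ where $V=V_{\mathrm{Max}}\uplus V_{\mathrm{Min}}\uplus T$ is a finite set of vertices (owned by player Max, player Min, and target vertices respectively), $E\subseteq (V\setminus T)\times V$ is a set of directed edges such that every $v\in V\setminus T$ has at least one successor, and $w\colon E\to\mathbb Z$ is a weight function. A play from $v_0$ is either a finite path $v_0v_1\cdots v_k$ with $v_k\in T$ and $v_i\notin T$ for $i<k$, or an infinite path never visiting $T$. Its total payoff is $\mathrm{TP}(\pi)=\sum_{i=0}^{k-1}w(v_i,v_{i+1})$ in the first case and $+\infty$ in the second. A strategy of Min maps every finite path ending in a vertex $v\in V_{\mathrm{Min}}$ to a probability distribution on $V$ supported in the successors of $v$; strategies of Max are defined symmetrically for $V_{\mathrm{Max}}$. A strategy is deterministic if it always returns a Dirac distribution, and memoryless if its output depends only on the last vertex. For deterministic strategies $\sigma$ of Min and $\tau$ of Max there is a unique play $\mathrm{out}(v,\sigma,\tau)$ from $v$ conforming to both; define $\mathrm{Val}^{\sigma}(v)=\sup_{\tau}\mathrm{TP}(\mathrm{out}(v,\sigma,\tau))$ and $\mathrm{Val}^{\mathrm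 d}(v)=\inf_{\sigma}\mathrm{Val}^{\sigma}(v)$ (sup/inf over deterministic strategies; this equals $\sup_\tau\inf_\sigma$). For a memoryless strategy $\rho$ of Min and a memoryless strategy $\tau$ of Max one obtains a Markov chain on $V$ (from $v\in V_{\mathrm{Min}}$ move according to $\rho(v)$, from $v\in V_{\mathrm{Max}}$ according to $\tau(v)$, targets absorbing); write $\mathbb P^{\rho,\tau}_v$ for the induced probability measure on plays from $v$ and $\mathbb E^{\rho,\tau}_v(\mathrm{TP})$ for the expected total payoff (which is $+\infty$ if the target is missed with positive probability). Define $\mathrm{Val}^{\mathrm m,\rho}(v)=\sup_{\tau}\mathbb E^{\rho,\tau}_v(\mathrm{TP})$ over memoryless strategies $\tau$ of Max, and the memoryless upper value $\overline{\mathrm{Val}}^{\mathrm m}(v)=\inf_{\rho}\mathrm{Val}^{\mathrm m,\rho}(v)$ over memoryless strategies $\rho$ of Min. *)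

(* Defs.v *)
From HB Require Import structures.
From mathcomp Require Import all_boot all_order all_algebra.
From mathcomp Require Import all_classical all_reals all_analysis.
Set Implicit Arguments. Unset Strict Implicit. Unset Printing Implicit Defensive.
Import Order.TTheory GRing.Theory Num.Theory.
Local Open Scope ring_scope.

(* A shortest-path game on a finite vertex type V.
   Weights are given as a function V -> V -> int; only its values on
   edges are ever used. *)
Record spg (V : finType) := SPG {
  VMax : {set V};
  VMin : {set V};
  Tg : {set V};
  edge : rel V;
  weight : V -> V -> int;
  spg_disj_MaxMin : [disjoint VMax & VMin];
  spg_disj_MaxT : [disjoint VMax & Tg];
  spg_disj_MinT : [disjoint VMin & Tg];
  spg_cover : VMax :|: VMin :|: Tg = [set: V];
  spg_edge_src : forall u u', edge u u' -> u \notin Tg;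
  spg_succ : forall u, u \notin Tg -> exists u', edge u u' }.

Local Open Scope classical_set_scope.

Section Deterministic.
Context (R : realType) {V : finType} (G : spg V).

(* A deterministic (history-dependent) strategy for the owner of the
   vertices in P: it maps a finite path x :: h (whose last vertex is
   last x h) to a vertex, which must be a successor when the last vertex
   is in P. *)
Definition det_strat (P : {set V}) (s : seq V -> V) : Prop :=
  forall x h, last x h \in P -> edge G (last x h) (s (x :: h)).

(* Prefix of length n+1 of the outcome from v of the deterministic
   strategies s (Min) and t (Max); once a target is reached the sequence
   stutters there (this is only used until the first target). *)
Fixpoint hist (s t : seq V -> V) (v : V) (n : nat) : seq V :=
  match n with
  | 0 => [:: v]
  | n.+1 =>
      let h := hist s t v n in
      let u := last v h in
      rcons h (if u \in Tg G then u
               else if u \in VMin G then s h else t h)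
  end.

Definition out (s t : seq V -> V) (v : V) (n : nat) : V := last v (hist s t v n).

Definition TP (p : nat -> V) : \bar R :=
  match pselect (exists k, p k \in Tg G) with
  | left H => ((\sum_(i < @ex_minn (fun k => p k \in Tg G) H)
                  weight G (p i) (p i.+1))%:~R)%:E
  | right _ => +oo%E
  end.

Definition Val_sigma (s : seq V -> V) (v : V) : \bar R :=
  ereal_sup [set TP (out s t v) | t in det_strat (VMax G)].

Definition Val_d (v : V) : \bar R :=
  ereal_inf [set Val_sigma s v | s in det_strat (VMin G)].

End Deterministic.

Section Memoryless.
Context (R : realType) {V : finType} (G : spg V).

Definition ml_strat (P : {set V}) (r : V -> V -> R) : Prop :=
  forall u, u \in P ->
    [/\ forall u', 0 <= r u u',
        \sum_u' r u u' = 1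
      & forall u', r u u' != 0 -> edge G u u'].

Definition trans (rho tau : V -> V -> R) (u u' : V) : R :=
  if u \in VMin G then rho u u'
  else if u \in VMax G then tau u u'
  else (u == u')%:R.

Definition pathv (v : V) (s : seq V) (i : nat) : V := nth v (v :: s) i.

Definition path_prob (rho tau : V -> V -> R) (v : V) (n : nat)
    (s : n.-tuple V) : R :=
  \prod_(i < n) trans rho tau (pathv v s i) (pathv v s i.+1).

Definition trunc_TP (v : V) (n : nat) (s : n.-tuple V) : R :=
  \sum_(i < n) (if pathv v s i \in Tg G then 0
                else (weight G (pathv v s i) (pathv v s i.+1))%:~R).

Definition reach_prob (rho tau : V -> V -> R) (v : V) (n : nat) : R :=
  \sum_(s : n.-tuple V | last v s \in Tg G) path_prob rho tau v s.

Definition exp_trunc (rho tau : V -> V -> R) (v : V) (n : nat) : R :=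
  \sum_(s : n.-tuple V) path_prob rho tau v s * trunc_TP v s.

Definition ETP (rho tau : V -> V -> R) (v : V) : \bar R :=
  if limn (fun n => (reach_prob rho tau v n)%:E) == 1%E
  then limn (fun n => (exp_trunc rho tau v n)%:E)
  else +oo%E.

Definition Val_m_rho (rho : V -> V -> R) (v : V) : \bar R :=
  ereal_sup [set ETP rho tau v | tau in ml_strat (VMax G)].

Definition Val_m_upper (v : V) : \bar R :=
  ereal_inf [set Val_m_rho rho v | rho in ml_strat (VMin G)].

End Memoryless.

(* Main.v *)
Require Import Defs.
From HB Require Import structures.
From mathcomp Require Import all_boot all_order all_algebra.
From mathcomp Require Import all_classical all_reals all_analysis.
From mathcomp Require Import zify ring lra.
Set Implicit Arguments. Unset Strict Implicit. Unset Printing Implicit Defensive.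
Import Order.TTheory GRing.Theory Num.Theory numFieldNormedType.Exports.
Local Open Scope ring_scope.
Local Open Scope classical_set_scope.

Lemma sum_tupleS (R : realType) (V : finType) n (F : n.+1.-tuple V -> R) :
  \sum_(s : n.+1.-tuple V) F s = \sum_(x : V) \sum_(s : n.-tuple V) F [tuple of x :: s].
Proof.
rewrite pair_big /=.
rewrite (reindex (fun p : V * n.-tuple V => [tuple of p.1 :: p.2])) //=.
exists (fun s : n.+1.-tuple V => (thead s, [tuple of behead s])).
  by case=> x s _ /=; rewrite theadE; congr pair; apply: val_inj.
by move=> s _; rewrite [in RHS](tuple_eta s).
Qed.
Section Basics.
Variables (V : finType) (G : spg V).

Lemma T_notMin u : u \in Tg G -> u \notin VMin G.
Proof. move=> uT; apply/negP => uM; move: (spg_disj_MinT G) => /disjointFr/(_ uM). by rewrite uT. Qed.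
Lemma T_notMax u : u \in Tg G -> u \notin VMax G.
Proof. move=> uT; apply/negP => uM; move: (spg_disj_MaxT G) => /disjointFr/(_ uM). by rewrite uT. Qed.
Lemma Min_notMax u : u \in VMin G -> u \notin VMax G.
Proof. move=> uM; apply/negP => uX; move: (spg_disj_MaxMin G) => /disjointFr/(_ uX). by rewrite uM. Qed.
Lemma notT_cases u : u \notin Tg G -> (u \in VMin G) || (u \in VMax G).
Proof.
move=> uT; have : u \in VMax G :|: VMin G :|: Tg G by rewrite (spg_cover G) inE.
by rewrite !inE (negbTE uT) orbF orbC.
Qed.
End Basics.

Section MC.
Variables (R : realType) (V : finType) (G : spg V) (rho tau : V -> V -> R).
Hypotheses (Hrho : ml_strat G (VMin G) rho) (Htau : ml_strat G (VMax G) tau).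
Local Notation tr := (trans G rho tau).

Lemma tr_T u x : u \in Tg G -> tr u x = (u == x)%:R.
Proof. by move=> uT; rewrite /trans (negbTE (T_notMin uT)) (negbTE (T_notMax uT)). Qed.

Lemma tr_ge0 u x : 0 <= tr u x.
Proof.
rewrite /trans; case: ifP => uM; first by case: (Hrho uM).
case: ifP => uX; first by case: (Htau uX).
by rewrite ler0n.
Qed.

Lemma tr_sum1 u : \sum_x tr u x = 1.
Proof.
have [uM|uM] := boolP (u \in VMin G).
  by under eq_bigr do rewrite /trans uM; case: (Hrho uM).
have [uX|uX] := boolP (u \in VMax G).
  by under eq_bigr do rewrite /trans (negbTE uM) uX; case: (Htau uX).
under eq_bigr do rewrite /trans (negbTE uM) (negbTE uX).
by rewrite (bigD1 u) //= eqxx big1 ?addr0 // => x /negPf; rewrite eq_sym => ->.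
Qed.

Lemma tr_edge u x : u \notin Tg G -> tr u x != 0 -> edge G u x.
Proof.
move=> uT; rewrite /trans; case: ifP => uM; first by case: (Hrho uM) => _ _; apply.
case: ifP => uX; first by case: (Htau uX) => _ _; apply.
by move: (notT_cases uT); rewrite uM uX.
Qed.

Definition E (f : V -> R) (u : V) (n : nat) : R :=
  \sum_(s : n.-tuple V) path_prob G rho tau u s * f (last u s).

Lemma pathv_cons u x n (s : n.-tuple V) i : (i <= n)%N ->
  pathv u [tuple of x :: s] i.+1 = pathv x s i.
Proof. by move=> hi; rewrite /pathv /= (set_nth_default x) //= size_tuple ltnS. Qed.

Lemma path_prob_cons u x n (s : n.-tuple V) :
  path_prob G rho tau u [tuple of x :: s] = tr u x * path_prob G rho tau x s.
Proof.
rewrite /path_prob big_ord_recl; congr (_ * _).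
apply: eq_bigr => i _; rewrite pathv_cons ?pathv_cons //.
  exact: ltnW (ltn_ord i).
exact: ltn_ord.
Qed.

Lemma trunc_TP_cons u x n (s : n.-tuple V) :
  trunc_TP R G u [tuple of x :: s] =
  (if u \in Tg G then 0 else (weight G u x)%:~R) + trunc_TP R G x s.
Proof.
rewrite /trunc_TP big_ord_recl; congr (_ + _).
apply: eq_bigr => i _; rewrite pathv_cons ?pathv_cons //.
  exact: ltnW (ltn_ord i).
exact: ltn_ord.
Qed.

Lemma sum_tuple0 (F : 0.-tuple V -> R) : \sum_(s : 0.-tuple V) F s = F [tuple].
Proof. by rewrite (big_pred1 [tuple]) // => s /=; apply/eqP; rewrite [s]tuple0. Qed.

Lemma E0 f u : E f u 0 = f u.
Proof. by rewrite /E sum_tuple0 /path_prob big_ord0 mul1r. Qed.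

Lemma ES f u n : E f u n.+1 = \sum_x tr u x * E f x n.
Proof.
rewrite /E sum_tupleS; apply: eq_bigr => x _; rewrite mulr_sumr.
by apply: eq_bigr => s _; rewrite path_prob_cons mulrA.
Qed.

Lemma E_ge0 f u n : (forall x, 0 <= f x) -> 0 <= E f u n.
Proof.
move=> f0; elim: n u => [|n IH] u; first by rewrite E0.
by rewrite ES sumr_ge0 // => x _; rewrite mulr_ge0 ?tr_ge0.
Qed.

Lemma E_lin a f g u n : E (fun x => a * f x + g x) u n = a * E f u n + E g u n.
Proof.
rewrite /E mulr_sumr -big_split /=; apply: eq_bigr => s _.
by rewrite mulrDr mulrCA.
Qed.

Lemma E_le f g u n : (forall x, f x <= g x) -> E f u n <= E g u n.
Proof.
move=> fg; rewrite -subr_ge0.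
have -> : E g u n - E f u n = E (fun x => (-1) * f x + g x) u n.
  by rewrite E_lin mulN1r addrC.
by apply: E_ge0 => x; rewrite mulN1r addrC subr_ge0.
Qed.

Definition closedS (S : V -> Prop) := forall u x, S u -> tr u x != 0 -> S x.

Lemma E_le_on (S : V -> Prop) f g : closedS S -> (forall x, S x -> f x <= g x) ->
  forall n u, S u -> E f u n <= E g u n.
Proof.
move=> cS fg; elim=> [|n IH] u Su; first by rewrite !E0 fg.
rewrite !ES; apply: ler_sum => x _.
have [->|tx] := eqVneq (tr u x) 0; first by rewrite !mul0r.
by rewrite ler_wpM2l ?tr_ge0 // IH //; exact: (cS u x).
Qed.

Lemma E1 u n : E (fun=> 1) u n = 1.
Proof.
elim: n u => [|n IH] u; first by rewrite E0.
by rewrite ES -[RHS](tr_sum1 u); apply: eq_bigr => x _; rewrite IH mulr1.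
Qed.

Lemma Eback f u n : E f u n.+1 = E (fun x => \sum_y tr x y * f y) u n.
Proof.
elim: n u => [|n IH] u; first by rewrite ES E0; apply: eq_bigr => x _; rewrite E0.
by rewrite ES [RHS]ES; apply: eq_bigr => x _; rewrite IH.
Qed.

Lemma ECK f u m n : E f u (m + n) = E (fun x => E f x n) u m.
Proof.
elim: m u => [|m IH] u; first by rewrite E0.
by rewrite addSn !ES; apply: eq_bigr => x _; rewrite IH.
Qed.

Lemma E_T f u n : u \in Tg G -> E f u n = f u.
Proof.
move=> uT; elim: n => [|n IH]; first by rewrite E0.
rewrite ES (bigD1 u) //= tr_T // eqxx mul1r IH big1 ?addr0 // => x /negPf.
by rewrite tr_T // eq_sym => ->; rewrite mul0r.
Qed.

Definition wt (u x : V) : R := if u \in Tg G then 0 else (weight G u x)%:~R.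

Lemma exp_trunc0 u : exp_trunc G rho tau u 0 = 0.
Proof. by rewrite /exp_trunc sum_tuple0 /trunc_TP big_ord0 mulr0. Qed.

Lemma exp_truncS u n : exp_trunc G rho tau u n.+1 =
  \sum_x tr u x * (wt u x + exp_trunc G rho tau x n).
Proof.
rewrite /exp_trunc sum_tupleS; apply: eq_bigr => x _.
under eq_bigr do rewrite path_prob_cons trunc_TP_cons.
have H : \sum_(s : n.-tuple V) path_prob G rho tau x s = 1.
  by rewrite -(E1 x n) /E; apply: eq_bigr => s _; rewrite mulr1.
transitivity (\sum_(s : n.-tuple V) (tr u x * wt u x * path_prob G rho tau x s +
   tr u x * (path_prob G rho tau x s * trunc_TP R G x s))).
  by apply: eq_bigr => s _; rewrite /wt; ring.
by rewrite big_split /= -mulr_sumr -mulr_sumr H mulr1 mulrDr.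
Qed.

Lemma reach_probE u n : reach_prob G rho tau u n = E (fun x => (x \in Tg G)%:R) u n.
Proof.
rewrite /reach_prob /E big_mkcond /=; apply: eq_bigr => s _.
by case: ifP => _; rewrite ?mulr1 ?mulr0.
Qed.

End MC.

Lemma lim_le_bound (R : realType) (u m : nat -> R) c C :
  cvgn u -> m @ \oo --> 0 -> (forall n, u n <= c + C * m n) -> limn u <= c.
Proof.
move=> cu m0 H.
have h : (fun n => c + C * m n) @ \oo --> c + C * 0.
  by apply: cvgD; [exact: cvg_cst | exact: cvgMl_tmp].
rewrite mulr0 addr0 in h.
rewrite -(cvg_lim _ h) //; apply: ler_lim => //; first exact: cvgP h.
by near=> n; apply: H.
Unshelve. all: by end_near.
Qed.

Lemma lim_ge_bound (R : realType) (u m : nat -> R) c C :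
  cvgn u -> m @ \oo --> 0 -> (forall n, c + C * m n <= u n) -> c <= limn u.
Proof.
move=> cu m0 H.
have h : (fun n => c + C * m n) @ \oo --> c + C * 0.
  by apply: cvgD; [exact: cvg_cst | exact: cvgMl_tmp].
rewrite mulr0 addr0 in h.
rewrite -(cvg_lim _ h) //; apply: ler_lim => //; first exact: cvgP h.
by near=> n; apply: H.
Unshelve. all: by end_near.
Qed.

Section Core.
Variables (R : realType) (V : finType) (G : spg V) (rho tau : V -> V -> R).
Hypotheses (Hrho : ml_strat G (VMin G) rho) (Htau : ml_strat G (VMax G) tau).
Local Notation tr := (trans G rho tau).
Local Notation E := (E G rho tau).
Definition tT (x : V) : R := (x \in Tg G)%:R.
Definition nT (x : V) : R := (x \notin Tg G)%:R.

Lemma E_scale a f u n : E (fun x => a * f x) u n = a * E f u n.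
Proof. by rewrite /E mulr_sumr; apply: eq_bigr => s _; rewrite mulrCA. Qed.

Lemma E_add f g u n : E (fun x => f x + g x) u n = E f u n + E g u n.
Proof. by rewrite -[E f u n]mul1r -E_lin; apply: eq_bigr => s _; rewrite mul1r. Qed.

Lemma E_opp f u n : E (fun x => - f x) u n = - E f u n.
Proof. by rewrite -mulN1r -E_scale; apply: eq_bigr => s _; rewrite mulN1r. Qed.

Lemma E_nT u n : E nT u n = 1 - E tT u n.
Proof.
have -> : nT = fun x => 1 + - tT x.
  by apply: funext => x; rewrite /tT /nT; case: (x \in Tg G); rewrite /= ?subrr ?subr0.
by rewrite E_add E_opp (E1 Hrho Htau).
Qed.

Lemma E_tT_le1 u n : E tT u n <= 1.
Proof.
rewrite -(E1 Hrho Htau u n); apply: (E_le Hrho Htau) => x; rewrite /tT.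
by rewrite /= lern1 leq_b1.
Qed.

Lemma E_tT_ge0 u n : 0 <= E tT u n.
Proof. by apply: (E_ge0 Hrho Htau) => x; rewrite /tT ler0n. Qed.

Lemma E_nT_ge0 u n : 0 <= E nT u n.
Proof. by apply: (E_ge0 Hrho Htau) => x; rewrite /nT ler0n. Qed.

Lemma reach_monoS u n : E tT u n <= E tT u n.+1.
Proof.
rewrite Eback; apply: (E_le Hrho Htau) => x; rewrite /tT.
case xT: (x \in Tg G).
  rewrite (bigD1 x) //= tr_T // eqxx mul1r xT big1 ?addr0 // => y /negPf.
  by rewrite tr_T // eq_sym => ->; rewrite mul0r.
by rewrite sumr_ge0 // => y _; rewrite mulr_ge0 ?ler0n ?tr_ge0.
Qed.

Lemma reach_mono u m n : (m <= n)%N -> E tT u m <= E tT u n.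
Proof.
move/subnK => <-; elim: (n - m)%N => [|k IH]; first by rewrite add0n.
by rewrite addSn (le_trans IH) // reach_monoS.
Qed.

Lemma nT_mono u m n : (m <= n)%N -> E nT u n <= E nT u m.
Proof. by move=> mn; rewrite !E_nT lerB // reach_mono. Qed.

Lemma find_K (S : V -> Prop) : (forall u, S u -> exists k, 0 < E tT u k) ->
  exists K κ, 0 < κ /\ forall u, S u -> κ <= E tT u K.
Proof.
move=> HS.
suff : forall l : seq V, exists K κ, 0 < κ /\ forall u, u \in l -> S u -> κ <= E tT u K.
  by case/(_ (enum V)) => K [κ [k0 Hk]]; exists K, κ; split => // u; apply: Hk; rewrite mem_enum.
elim=> [|x l [K [κ [k0 Hk]]]]; first by exists 0%N, 1; split => // u; rewrite in_nil.
have [Sx|nSx] := pselect (S x); last first.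
  exists K, κ; split => // u; rewrite inE => /orP[/eqP -> //|]; exact: Hk.
have [k pk] := HS x Sx.
exists (maxn K k), (Num.min κ (E tT x k)); split; first by rewrite lt_min k0.
move=> u; rewrite inE => /orP[/eqP ->|ul] Su.
  by rewrite ge_min; apply/orP; right; apply: reach_mono; exact: leq_maxr.
by rewrite ge_min; apply/orP; left; apply: (le_trans (Hk u ul Su)); apply: reach_mono; exact: leq_maxl.
Qed.

Lemma geom_sum (q : R) j : (1 - q) * \sum_(l < j) q ^+ l = 1 - q ^+ j.
Proof.
elim: j => [|j IH]; first by rewrite big_ord0 expr0 mulr0 subrr.
by rewrite big_ord_recr /= mulrDr IH exprS; ring.
Qed.

Variables (S : V -> Prop) (v : V).
Hypotheses (cS : closedS G rho tau S) (Sv : S v)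
  (good : forall u, S u -> exists k, 0 < E tT u k).

Lemma core_decay : exists K κ, (0 < K)%N /\ 0 < κ /\ κ <= 1 /\
  forall j, E nT v (j * K) <= (1 - κ) ^+ j.
Proof.
have [K [κ [k0 Hk]]] := find_K good.
have Hk' : forall u, S u -> κ <= E tT u K.+1.
  by move=> u Su; rewrite (le_trans (Hk u Su)) // reach_mono.
have k1 : κ <= 1 by rewrite (le_trans (Hk v Sv)) // E_tT_le1.
exists K.+1, κ; do 3!split => //.
have dec : forall u n, S u -> E nT u (n + K.+1) <= (1 - κ) * E nT u n.
  move=> u n Su; rewrite ECK -E_scale.
  apply: (E_le_on Hrho Htau cS) => // x Sx.
  have [xT|xT] := boolP (x \in Tg G).
    by rewrite E_T // /nT xT mulr0.
  by rewrite /nT xT mulr1 E_nT lerB // Hk'.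
elim=> [|j IH]; first by rewrite mul0n E0 expr0 /nT lern1 leq_b1.
rewrite mulSn addnC (le_trans (dec v _ Sv)) // exprS ler_wpM2l //.
by rewrite subr_ge0.
Qed.

Lemma core_sum : exists B, forall n, \sum_(0 <= i < n) E nT v i <= B.
Proof.
have [K [κ [K0 [k0 [k1 Hj]]]]] := core_decay.
exists (K%:R / κ) => n.
have step : forall j, \sum_(0 <= i < j * K) E nT v i <= K%:R * \sum_(l < j) (1 - κ) ^+ l.
  elim=> [|j IH]; first by rewrite mul0n big_geq // big_ord0 mulr0.
  rewrite (big_cat_nat (n := j * K)) //=; last by rewrite leq_mul2r leqnSn orbT.
  rewrite big_ord_recr /= mulrDr lerD //.
  rewrite mulSn addnC (@le_trans _ _ (\sum_(j * K <= i < j * K + K) E nT v (j * K))) //.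
    by apply: ler_sum_nat => i /andP[hi _]; apply: nT_mono.
  by rewrite sumr_const_nat addnC addnK mulr_natl ler_wMn2r //.
have gs : forall j, \sum_(l < j) (1 - κ) ^+ l <= κ^-1.
  move=> j; rewrite -(ler_pM2l k0) mulfV ?gt_eqF //.
  have := geom_sum (1 - κ) j; have -> : 1 - (1 - κ) = κ by ring.
  move=> ->.
  by rewrite gerBl exprn_ge0 // subr_ge0.
apply: (@le_trans _ _ (\sum_(0 <= i < n * K) E nT v i)).
  rewrite [X in _ <= X](big_cat_nat (n := n)) //=; last by rewrite leq_pmulr.
  by rewrite lerDl sumr_ge0 // => i _; apply: E_nT_ge0.
by rewrite (le_trans (step n)) // ler_pM2l ?ltr0n.
Qed.

End Core.

Lemma le_sum1 (R : realType) (V : finType) (F : V -> R) x0 :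
  (forall x, 0 <= F x) -> F x0 <= \sum_x F x.
Proof. by move=> F0; rewrite (bigD1 x0) //= lerDl sumr_ge0. Qed.

Section Core2.
Variables (R : realType) (V : finType) (G : spg V) (rho tau : V -> V -> R).
Hypotheses (Hrho : ml_strat G (VMin G) rho) (Htau : ml_strat G (VMax G) tau).
Local Notation tr := (trans G rho tau).
Local Notation E := (E G rho tau).
Local Notation tT := (@tT R V G).
Local Notation nT := (@nT R V G).

Definition gw (x : V) : R := \sum_y tr x y * wt R G x y.

Lemma exp_trunc_series u n :
  exp_trunc G rho tau u n = \sum_(0 <= i < n) E gw u i.
Proof.
elim: n u => [|n IH] u; first by rewrite exp_trunc0 big_geq.
rewrite (exp_truncS Hrho Htau) big_nat_recl // E0.
transitivity (\sum_x (tr u x * wt R G u x + \sum_(0 <= i < n) tr u x * E gw x i)).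
  by apply: eq_bigr => x _; rewrite IH mulrDr mulr_sumr.
rewrite big_split /=; congr (_ + _).
rewrite exchange_big /=; apply: eq_bigr => i _.
by rewrite ES.
Qed.

Definition Wb : R := \sum_x \sum_y `|(weight G x y)%:~R : R|.

Lemma Wb_ge0 : 0 <= Wb.
Proof. by rewrite sumr_ge0 // => x _; rewrite sumr_ge0. Qed.

Lemma gw_bound x : `|gw x| <= Wb * nT x.
Proof.
rewrite /gw /nT; have [xT|xT] := boolP (x \in Tg G).
  by rewrite big1 ?normr0 ?mulr0 // => y _; rewrite /wt xT mulr0.
rewrite mulr1 (le_trans (ler_norm_sum _ _ _)) //.
rewrite -[Wb]mul1r -(tr_sum1 Hrho Htau x) mulr_suml; apply: ler_sum => y _.
rewrite normrM ger0_norm ?(tr_ge0 Hrho Htau) // ler_wpM2l ?(tr_ge0 Hrho Htau) //.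
rewrite /wt (negbTE xT).
apply: (le_trans _ (@le_sum1 _ _ (fun x' => \sum_y `|(weight G x' y)%:~R : R|) x _)).
  by apply: (@le_sum1 _ _ (fun y => `|(weight G x y)%:~R : R|) y).
by move=> z; rewrite sumr_ge0.
Qed.

Lemma E_gw_bound u n : `|E gw u n| <= Wb * E nT u n.
Proof.
rewrite ler_norml; apply/andP; split.
  rewrite -E_scale -E_opp; apply: (E_le Hrho Htau) => x.
  by move: (gw_bound x); rewrite ler_norml => /andP[].
rewrite -E_scale; apply: (E_le Hrho Htau) => x.
by move: (gw_bound x); rewrite ler_norml => /andP[].
Qed.

Variables (S : V -> Prop) (v : V).
Hypotheses (cS : closedS G rho tau S) (Sv : S v)
  (good : forall u, S u -> exists k, 0 < E tT u k).

Lemma series_nT_cvg : cvgn (series (fun i => E nT v i)).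
Proof.
have [B HB] := core_sum Hrho Htau cS Sv good.
apply: nondecreasing_is_cvgn.
  by apply: nondecreasing_series => n _ _; apply: E_nT_ge0.
by exists B => _ [n _ <-]; apply: HB.
Qed.

Lemma nT_to0 : (fun n => E nT v n) @ \oo --> 0.
Proof. exact: cvg_series_cvg_0 series_nT_cvg. Qed.

Lemma reach_to1 : (fun n => reach_prob G rho tau v n) @ \oo --> (1 : R).
Proof.
have -> : (fun n => reach_prob G rho tau v n) = (fun n => 1 - E nT v n).
  by apply: funext => n; rewrite reach_probE (E_nT Hrho Htau) opprB addrCA subrr addr0.
by rewrite -[X in _ --> X]subr0; apply: cvgB; [exact: cvg_cst | exact: nT_to0].
Qed.

Lemma exp_cvg : cvgn (fun n => exp_trunc G rho tau v n).
Proof.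
have -> : (fun n => exp_trunc G rho tau v n) = series (fun i => E gw v i).
  by apply: funext => n; rewrite exp_trunc_series.
apply: normed_cvg.
apply: (@series_le_cvg _ _ (fun i => Wb * E nT v i)).
- by move=> n; exact: normr_ge0.
- by move=> n; rewrite mulr_ge0 ?Wb_ge0 ?(E_nT_ge0 Hrho Htau).
- by move=> n; apply: E_gw_bound.
have [B HB] := core_sum Hrho Htau cS Sv good.
apply: nondecreasing_is_cvgn.
  by apply: nondecreasing_series => n _ _; rewrite mulr_ge0 ?Wb_ge0 ?(E_nT_ge0 Hrho Htau).
exists (Wb * B) => _ [n _ <-] /=.
rewrite /series /= -mulr_sumr ler_wpM2l ?Wb_ge0 //; exact: HB.
Qed.

Lemma limn_reach : limn (fun n => (reach_prob G rho tau v n)%:E) = 1%E.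
Proof.
rewrite (EFin_lim (f := fun n => reach_prob G rho tau v n)); last exact: cvgP reach_to1.
by rewrite (cvg_lim _ reach_to1).
Qed.

End Core2.

Section LemG.
Variables (R : realType) (V : finType) (G : spg V) (rho tau : V -> V -> R).
Hypotheses (Hrho : ml_strat G (VMin G) rho) (Htau : ml_strat G (VMax G) tau).
Local Notation tr := (trans G rho tau).
Local Notation E := (E G rho tau).
Local Notation tT := (@tT R V G).
Local Notation nT := (@nT R V G).
Variable v : V.

Definition ind (u x : V) : R := (x == u)%:R.
Definition reachS (u : V) : Prop := exists n, 0 < E (ind u) v n.

Lemma reachS_v : reachS v.
Proof. by exists 0%N; rewrite E0 /ind eqxx ltr01. Qed.

Lemma reachS_closed : closedS G rho tau reachS.
Proof.
move=> u x [n pn] tux; exists n.+1; rewrite Eback.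
have tpos : 0 < tr u x by rewrite lt_neqAle eq_sym tux (tr_ge0 Hrho Htau).
apply: (lt_le_trans (y := E (fun y => tr u x * ind u y) v n)).
  by rewrite E_scale mulr_gt0.
apply: (E_le Hrho Htau) => y.
rewrite (bigD1 x) //= /ind eqxx mulr1 big1 ?addr0; last first.
  by move=> z /negPf ->; rewrite mulr0.
case: (y =P u) => [->|_]; first by rewrite mulr1.
by rewrite mulr0 (tr_ge0 Hrho Htau).
Qed.
Hypothesis hreach : limn (fun n => (reach_prob G rho tau v n)%:E) = 1%E.

Lemma reach_cvg1 : (fun n => E nT v n) @ \oo --> 0.
Proof.
have cr : cvgn (fun n => reach_prob G rho tau v n).
  apply: nondecreasing_is_cvgn.
    by apply/nondecreasing_seqP => n; rewrite !reach_probE reach_monoS.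
  by exists 1 => _ [n _ <-]; rewrite reach_probE E_tT_le1.
have l1 : limn (fun n => reach_prob G rho tau v n) = 1.
  by apply/EFin_inj; rewrite -EFin_lim.
have : (fun n => reach_prob G rho tau v n) @ \oo --> (1 : R) by rewrite -l1.
have -> : (fun n => E nT v n) = (fun n => 1 - reach_prob G rho tau v n).
  by apply: funext => n; rewrite reach_probE (E_nT Hrho Htau).
move=> h; rewrite -(subrr (1 : R)); apply: cvgB => //; exact: cvg_cst.
Qed.

Lemma reachS_good u : reachS u -> exists k, 0 < E tT u k.
Proof.
move=> [n pn]; have [//|nk] := pselect (exists k, 0 < E tT u k).
have z : forall k, E tT u k = 0.
  move=> k; apply/eqP; rewrite eq_le (E_tT_ge0 Hrho Htau) andbT.
  by rewrite leNgt; apply/negP => h; apply: nk; exists k.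
have low : forall m, E (ind u) v n <= E nT v m.
  move=> m; apply: (le_trans _ (nT_mono Hrho Htau v (leq_maxl m n))).
  rewrite maxnC -(subnKC (leq_maxl n m)) (ECK G).
  apply: (E_le Hrho Htau) => x; rewrite /ind.
  have [->|_] := eqVneq x u; last by rewrite (E_nT_ge0 Hrho Htau).
  by rewrite (E_nT Hrho Htau) z subr0.
have : E (ind u) v n <= 0.
  rewrite -[0](cvg_lim _ reach_cvg1) //.
  apply: (lim_ge_bound (m := fun m => E nT v m) (C := 0)).
  - exact: cvgP reach_cvg1.
  - exact: reach_cvg1.
  - by move=> m; rewrite mul0r addr0.
by rewrite leNgt pn.
Qed.

End LemG.

Section Game.
Variables (R : realType) (V : finType) (G : spg V).
Local Notation w x y := ((weight G x y)%:~R : R).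

Definition succ0 (u : V) : V := odflt u [pick x | edge G u x].

Lemma succ0P u : u \notin Tg G -> edge G u (succ0 u).
Proof.
move=> uT; rewrite /succ0; case: pickP => //= h.
by have [x ex] := spg_succ uT; move: (h x); rewrite ex.
Qed.

Definition chooseY (Yj : V -> \bar R) (u : V) : V :=
  let F := fun x => ((w u x)%:E + Yj x)%E in
  if u \in VMin G then Order.arg_min (succ0 u) (fun x => edge G u x) F
  else Order.arg_max (succ0 u) (fun x => edge G u x) F.

Fixpoint Y (j : nat) (u : V) : \bar R :=
  match j with
  | 0 => if u \in Tg G then 0%E else +oo%E
  | j.+1 => if u \in Tg G then 0%E
            else ((w u (chooseY (Y j) u))%:E + Y j (chooseY (Y j) u))%E
  end.

Definition cY j u := chooseY (Y j) u.

Lemma Y_S j u : Y j.+1 u = if u \in Tg G then 0%E else ((w u (cY j u))%:E + Y j (cY j u))%E.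
Proof. by []. Qed.

Lemma Y_T j u : u \in Tg G -> Y j u = 0%E.
Proof. by case: j => [|j] /= ->. Qed.

Lemma cY_edge j u : u \notin Tg G -> edge G u (cY j u).
Proof.
move=> uT; rewrite /cY /chooseY; case: ifP => _.
  by case: arg_minP => //; exact: succ0P.
by case: arg_maxP => //; exact: succ0P.
Qed.

Lemma Y_min j u x : u \notin Tg G -> u \in VMin G -> edge G u x ->
  (Y j.+1 u <= (w u x)%:E + Y j x)%E.
Proof.
move=> uT uM ex; rewrite Y_S (negbTE uT) /cY /chooseY uM.
by case: arg_minP => [|y _ Hy]; [exact: succ0P | exact: Hy].
Qed.

Lemma Y_max j u x : u \notin Tg G -> u \notin VMin G -> edge G u x ->
  ((w u x)%:E + Y j x <= Y j.+1 u)%E.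
Proof.
move=> uT uM ex; rewrite Y_S (negbTE uT) /cY /chooseY (negbTE uM).
by case: arg_maxP => [|y _ Hy]; [exact: succ0P | exact: Hy].
Qed.

Lemma Y_mono j u : (Y j.+1 u <= Y j u)%E.
Proof.
elim: j u => [|j IH] u.
  by rewrite Y_S /=; case: ifP => _; rewrite ?leey.
have [uT|uT] := boolP (u \in Tg G); first by rewrite !Y_T.
have [uM|uM] := boolP (u \in VMin G).
  rewrite (le_trans (Y_min _ uT uM (cY_edge j uT))) // [X in (_ <= X)%E]Y_S (negbTE uT).
  exact: leeD2l.
rewrite Y_S (negbTE uT) (le_trans _ (Y_max j uT uM (cY_edge j.+1 uT))) //.
exact: leeD2l.
Qed.

Lemma Y_monoN i j u : (i <= j)%N -> (Y j u <= Y i u)%E.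
Proof.
move/subnK => <-; elim: (j - i)%N => [|k IH]; first by rewrite add0n.
by rewrite addSn (le_trans (Y_mono _ _)).
Qed.

Lemma Y_int j u : Y j u = +oo%E \/ exists z : int, Y j u = ((z%:~R : R)%:E).
Proof.
elim: j u => [|j IH] u.
  by rewrite /=; case: ifP => _; [right; exists 0; rewrite mulr0z | left].
rewrite Y_S; case: ifP => _; first by right; exists 0; rewrite mulr0z.
case: (IH (cY j u)) => [->|[z ->]]; first by left.
by right; exists (weight G u (cY j u) + z); rewrite -EFinD intrD.
Qed.

Lemma Y_neq_ninf j u : Y j u != -oo%E.
Proof. by case: (Y_int j u) => [->|[z ->]]. Qed.

Definition Yinf (u : V) : \bar R := ereal_inf (range (fun j => Y j u)).

Lemma Yinf_le j u : (Yinf u <= Y j u)%E.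
Proof. by apply: ereal_inf_lbound; exists j. Qed.

Lemma Yinf_T u : u \in Tg G -> Yinf u = 0%E.
Proof.
move=> uT; apply/eqP; rewrite eq_le (le_trans (Yinf_le 0 u)) ?Y_T //=.
by apply: le_ereal_inf_tmp => _ [j _ <-]; rewrite Y_T.
Qed.

Lemma Yinf_min u x : u \notin Tg G -> u \in VMin G -> edge G u x ->
  (Yinf u <= (w u x)%:E + Yinf x)%E.
Proof.
move=> uT uM ex.
rewrite -leeBlDl //; apply: le_ereal_inf_tmp => _ [j _ <-].
rewrite leeBlDl // (le_trans (Yinf_le j.+1 u)) //; exact: Y_min.
Qed.

Definition tstar (u : V) : V :=
  Order.arg_max (succ0 u) (fun x => edge G u x) (fun x => ((w u x)%:E + Yinf x)%E).

Lemma tstar_edge u : u \notin Tg G -> edge G u (tstar u).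
Proof. by move=> uT; rewrite /tstar; case: arg_maxP => //; exact: succ0P. Qed.

Lemma Yinf_max u : u \notin Tg G -> u \notin VMin G ->
  (Yinf u <= (w u (tstar u))%:E + Yinf (tstar u))%E.
Proof.
move=> uT uM; rewrite leNgt; apply/negP => hlt.
have hb : forall x, edge G u x -> exists j, ((w u x)%:E + Y j x < Yinf u)%E.
  move=> x ex.
  have : ((w u x)%:E + Yinf x < Yinf u)%E.
    apply: le_lt_trans hlt; rewrite /tstar; case: arg_maxP => [|y _ Hy]; first exact: succ0P.
    exact: Hy.
  rewrite -lteBrDl // => /ereal_inf_lt [_ [j _ <-] hj]; exists j.
  by rewrite -lteBrDl.
suff [J HJ] : exists J, forall x, edge G u x -> ((w u x)%:E + Y J x < Yinf u)%E.
  have := Yinf_le J.+1 u; rewrite Y_S (negbTE uT) /cY /chooseY (negbTE uM).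
  case: arg_maxP => [|y ey _]; first exact: succ0P.
  by move=> h; move: (lt_le_trans (HJ y ey) h); rewrite ltxx.
suff : forall l : seq V, exists J, forall x, x \in l -> edge G u x ->
    ((w u x)%:E + Y J x < Yinf u)%E.
  by case/(_ (enum V)) => J HJ; exists J => x; apply: HJ; rewrite mem_enum.
elim=> [|x l [J HJ]]; first by exists 0%N.
have [ex|nex] := boolP (edge G u x); last first.
  exists J => y; rewrite inE => /orP[/eqP -> ex'|yl ey]; last exact: HJ.
  by rewrite ex' in nex.
have [k hk] := hb x ex.
exists (maxn J k) => y; rewrite inE => /orP[/eqP ->|yl] ey.
  by apply: le_lt_trans hk; apply: leeD2l; apply: Y_monoN; exact: leq_maxr.
by apply: le_lt_trans (HJ y yl ey); apply: leeD2l; apply: Y_monoN; exact: leq_maxl.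
Qed.

End Game.

Section Plays.
Variables (R : realType) (V : finType) (G : spg V).
Local Notation w x y := ((weight G x y)%:~R : R).

Lemma hist_cons (s t : seq V -> V) v n : exists h, hist G s t v n = v :: h /\ size h = n.
Proof.
elim: n => [|n [h [eh sh]]]; first by exists [::].
rewrite /= eh.
by exists (rcons h (let u := last v (v :: h) in if u \in Tg G then u else if u \in VMin G
   then s (v :: h) else t (v :: h))); rewrite /= size_rcons sh.
Qed.

Lemma out_S (s t : seq V -> V) v n : out G s t v n.+1 =
  let u := out G s t v n in
  if u \in Tg G then u else if u \in VMin G then s (hist G s t v n) else t (hist G s t v n).
Proof. by rewrite /out /= last_rcons. Qed.

Lemma out_stay (s t : seq V -> V) v n m : out G s t v n \in Tg G -> (n <= m)%N ->
  out G s t v m = out G s t v n.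
Proof.
move=> hT /subnK <-; elim: (m - n)%N => [|k IH]; first by rewrite add0n.
by rewrite addSn out_S /= IH hT.
Qed.

Lemma out_min (s t : seq V -> V) v n : det_strat G (VMin G) s ->
  out G s t v n \notin Tg G -> out G s t v n \in VMin G ->
  out G s t v n.+1 = s (hist G s t v n) /\ edge G (out G s t v n) (out G s t v n.+1).
Proof.
move=> ds uT uM; rewrite out_S /= (negbTE uT) uM; split => //.
have [h [eh _]] := hist_cons s t v n.
move: uM; rewrite /out eh /= => uM; exact: ds.
Qed.

Lemma out_max (s t : seq V -> V) v n : det_strat G (VMax G) t ->
  out G s t v n \notin Tg G -> out G s t v n \notin VMin G ->
  out G s t v n.+1 = t (hist G s t v n) /\ edge G (out G s t v n) (out G s t v n.+1).
Proof.
move=> dt uT uM; rewrite out_S /= (negbTE uT) (negbTE uM); split => //.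
have uX : out G s t v n \in VMax G by move: (notT_cases uT); rewrite (negbTE uM).
have [h [eh _]] := hist_cons s t v n.
move: uX; rewrite /out eh /= => uX; exact: dt.
Qed.

Lemma TP_inf (p : nat -> V) : (forall k, p k \notin Tg G) -> TP R G p = +oo%E.
Proof.
move=> h; rewrite /TP; case: pselect => // -[k hk].
by move: (h k); rewrite hk.
Qed.

Lemma TP_fin (p : nat -> V) k : p k \in Tg G -> (forall i, (i < k)%N -> p i \notin Tg G) ->
  TP R G p = ((\sum_(i < k) w (p i) (p i.+1))%:E).
Proof.
move=> pk hk; rewrite /TP; case: pselect => [H|nH]; last by exfalso; apply: nH; exists k.
case: (ex_minnP H) => m Pm Hm.
have -> : m = k.
  apply/eqP; rewrite eqn_leq Hm //= leqNgt; apply/negP => /hk.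
  by rewrite Pm.
by rewrite rmorph_sum.
Qed.

Definition tst (x0 : V) (h : seq V) : V := tstar R G (last x0 h).

Lemma tst_strat x0 : det_strat G (VMax G) (tst x0).
Proof.
move=> x h hX; rewrite /tst /=; apply: tstar_edge.
by apply/negP => hT; move: (T_notMax hT); rewrite hX.
Qed.

Lemma sum_shift (F : nat -> R) i k : (i < k)%N ->
  \sum_(i <= l < k) F l = F i + \sum_(i.+1 <= l < k) F l.
Proof. by move=> ik; rewrite big_ltn. Qed.

Lemma TP_ge_Yinf (s : seq V -> V) v : det_strat G (VMin G) s ->
  (Yinf R G v <= TP R G (out G s (tst v) v))%E.
Proof.
move=> ds; set p := out G s (tst v) v.
have [[k pk]|nk] := pselect (exists k, p k \in Tg G); last first.
  by rewrite TP_inf ?leey // => k; apply/negP => h; apply: nk; exists k.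
have ex : exists k, (fun k => p k \in Tg G) k by exists k.
case: (ex_minnP ex) => {k pk ex} k pk hk.
have hk' : forall i, (i < k)%N -> p i \notin Tg G.
  by move=> i ik; apply/negP => /hk; rewrite leqNgt ik.
rewrite (TP_fin pk hk') -(big_mkord xpredT (fun i => w (p i) (p i.+1))).
suff : forall d, (d <= k)%N -> (Yinf R G (p (k - d)%N) <= (\sum_((k - d)%N <= l < k) w (p l) (p l.+1))%:E)%E.
  by move/(_ k (leqnn k)); rewrite subnn /p /out /=.
elim=> [|d IH] dk; first by rewrite subn0 big_geq // Yinf_T.
have ik : (k - d.+1 < k)%N by rewrite ltn_subrL; apply/andP; split => //; exact: leq_ltn_trans dk.
have e1 : (k - d.+1).+1 = (k - d)%N by rewrite subnSK.
rewrite sum_shift // EFinD e1.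
have uT := hk' _ ik.
have [uM|uM] := boolP (p (k - d.+1)%N \in VMin G).
  have [_ ed] := out_min ds uT uM.
  rewrite -/p e1 in ed.
  apply: (le_trans (Yinf_min R uT uM ed)); apply: leeD2l; apply: IH; exact: ltnW.
have [eq _] := out_max (tst_strat v) uT uM.
rewrite -/p e1 in eq.
have ept : p (k - d)%N = tstar R G (p (k - d.+1)%N).
  rewrite eq /tst; have [h [eh _]] := hist_cons s (tst v) v (k - d.+1)%N.
  by rewrite /p /out eh.
rewrite ept; apply: (le_trans (Yinf_max R uT uM)); apply: leeD2l.
rewrite -ept; apply: IH; exact: ltnW.
Qed.

End Plays.

Section Horizon.
Variables (R : realType) (V : finType) (G : spg V).
Local Notation w x y := ((weight G x y)%:~R : R).

Definition shor (J : nat) (x0 : V) (h : seq V) : V :=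
  let u := last x0 h in let i := (size h).-1 in
  if (i < J)%N then cY R G (J - i.+1) u else succ0 G u.

Lemma shor_strat J x0 : det_strat G (VMin G) (shor J x0).
Proof.
move=> x h hM; have uT : last x h \notin Tg G.
  by apply/negP => hT; move: (T_notMin hT); rewrite hM.
rewrite /shor /=; case: ifP => _; [exact: cY_edge | exact: succ0P].
Qed.

Lemma TP_le_Y J v t : det_strat G (VMax G) t ->
  (TP R G (out G (shor J v) t v) <= Y R G J v)%E.
Proof.
move=> dt; set p := out G (shor J v) t v.
pose ws l : R := if p l \in Tg G then 0 else w (p l) (p l.+1).
have inv : forall i, (i <= J)%N ->
    ((\sum_(l < i) ws l)%:E + Y R G (J - i)%N (p i) <= Y R G J v)%E.
  elim=> [|i IH] iJ; first by rewrite big_ord0 subn0 add0e.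
  apply: le_trans (IH (ltnW iJ)).
  rewrite big_ord_recr /= EFinD -addeA; apply: leeD2l.
  have eJ : (J - i)%N = (J - i.+1).+1 by rewrite subnSK.
  rewrite eJ.
  have [uT|uT] := boolP (p i \in Tg G).
    have e : p i.+1 = p i by rewrite /p out_S /= -/p uT.
    by rewrite /ws uT e !Y_T // add0e.
  have [uM|uM] := boolP (p i \in VMin G).
    have [e _] := out_min (shor_strat J v) uT uM.
    rewrite -/p in e; rewrite Y_S (negbTE uT) /ws (negbTE uT) e.
    have [h [eh sh]] := hist_cons G (shor J v) t v i.
    rewrite eh /shor /= sh iJ.
    have -> : last v h = p i by rewrite /p /out eh.
    by [].
  have [_ ed] := out_max dt uT uM.
  by rewrite /ws (negbTE uT); apply: Y_max.
have [|[z hz]] := Y_int R G J v; first by move=> ->; rewrite leey.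
have := inv J (leqnn J); rewrite subnn hz.
have [pJ|pJ] := boolP (p J \in Tg G); last first.
  by rewrite /= (negbTE pJ) addey.
rewrite Y_T // adde0 => hle; apply: le_trans hle.
have ex : exists k, (fun k => p k \in Tg G) k by exists J.
case: (ex_minnP ex) => k pk hk.
have hk' : forall i, (i < k)%N -> p i \notin Tg G.
  by move=> i ik; apply/negP => /hk; rewrite leqNgt ik.
have kJ : (k <= J)%N by exact: hk.
rewrite (TP_fin R pk hk') lee_fin le_eqVlt; apply/orP; left; apply/eqP.
rewrite -(big_mkord xpredT ws) (big_cat_nat (n := k)) //= big_mkord.
rewrite [X in _ = _ + X]big1_seq ?addr0 /=; last first.
  move=> l; rewrite mem_index_iota => /andP[kl _].
  have e := out_stay pk kl; rewrite -/p in e; by rewrite /ws e pk.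
apply: eq_bigr => i _; rewrite /ws (negbTE (hk' _ (ltn_ord i))) //.
Qed.

End Horizon.

Section Pot.
Variables (R : realType) (V : finType) (G : spg V) (rho tau : V -> V -> R).
Hypotheses (Hrho : ml_strat G (VMin G) rho) (Htau : ml_strat G (VMax G) tau).
Local Notation tr := (trans G rho tau).
Local Notation E := (E G rho tau).
Local Notation wt := (wt R G).
Variables (S : V -> Prop) (cS : closedS G rho tau S) (f : V -> R).

Lemma pot_step n u : S u ->
  exp_trunc G rho tau u n.+1 + E f u n.+1 =
  \sum_x tr u x * (wt u x + (exp_trunc G rho tau x n + E f x n)).
Proof.
move=> Su; rewrite (exp_truncS Hrho Htau) ES -big_split /=.
by apply: eq_bigr => x _; rewrite -mulrDr addrA.
Qed.

Lemma pot_le : (forall u, S u -> \sum_x tr u x * (wt u x + f x) <= f u) ->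
  forall n u, S u -> exp_trunc G rho tau u n + E f u n <= f u.
Proof.
move=> Hf; elim=> [|n IH] u Su; first by rewrite exp_trunc0 E0 add0r.
rewrite pot_step //; apply: le_trans (Hf u Su); apply: ler_sum => x _.
have [->|tx] := eqVneq (tr u x) 0; first by rewrite !mul0r.
by rewrite ler_wpM2l ?(tr_ge0 Hrho Htau) // lerD2l IH //; exact: (cS Su tx).
Qed.

Lemma pot_ge : (forall u, S u -> f u <= \sum_x tr u x * (wt u x + f x)) ->
  forall n u, S u -> f u <= exp_trunc G rho tau u n + E f u n.
Proof.
move=> Hf; elim=> [|n IH] u Su; first by rewrite exp_trunc0 E0 add0r.
rewrite pot_step //; apply: le_trans (Hf u Su) _; apply: ler_sum => x _.
have [->|tx] := eqVneq (tr u x) 0; first by rewrite !mul0r.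
by rewrite ler_wpM2l ?(tr_ge0 Hrho Htau) // lerD2l IH //; exact: (cS Su tx).
Qed.

End Pot.

Lemma sum_ind (R : realType) (V : finType) (y : V) (F : V -> R) :
  \sum_x (x == y)%:R * F x = F y.
Proof.
rewrite (bigD1 y) //= eqxx mul1r big1 ?addr0 // => x /negPf ->.
by rewrite mul0r.
Qed.

Section M2.
Variables (R : realType) (V : finType) (G : spg V) (rho : V -> V -> R).
Hypothesis (Hrho : ml_strat G (VMin G) rho).
Local Notation w x y := ((weight G x y)%:~R : R).

Definition taus (u x : V) : R := (x == tstar R G u)%:R.

Lemma taus_strat : ml_strat G (VMax G) taus.
Proof.
move=> u uX; have uT : u \notin Tg G.
  by apply/negP => hT; move: (T_notMax hT); rewrite uX.
split.
- by move=> x; rewrite /taus ler0n.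
- by rewrite -[RHS](sum_ind (tstar R G u) (fun=> (1:R))); apply: eq_bigr => x _; rewrite mulr1.
- by move=> x; rewrite /taus pnatr_eq0 eqb0 negbK => /eqP ->; exact: tstar_edge.
Qed.

Local Notation tr := (trans G rho taus).
Local Notation E := (E G rho taus).

Lemma step_Yinf u x : tr u x != 0 -> (Yinf R G u <= (wt R G u x)%:E + Yinf R G x)%E.
Proof.
rewrite /trans /wt; have [uT|uT] := boolP (u \in Tg G).
  rewrite (negbTE (T_notMin uT)) (negbTE (T_notMax uT)) pnatr_eq0 eqb0 negbK.
  by move=> /eqP <-; rewrite add0e.
have [uM|uM] := boolP (u \in VMin G).
  by move=> h; apply: Yinf_min => //; case: (Hrho uM) => _ _; apply.
have uX : u \in VMax G by move: (notT_cases uT); rewrite (negbTE uM).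
rewrite uX /taus pnatr_eq0 eqb0 negbK => /eqP ->.
exact: Yinf_max.
Qed.

Lemma Yinf_pinf_noreach k y : Yinf R G y = +oo%E -> E (@tT R V G) y k = 0.
Proof.
elim: k y => [|k IH] y hy.
  rewrite E0 /tT; have [yT|//] := boolP (y \in Tg G).
  by move: hy; rewrite Yinf_T.
rewrite ES big1 // => x _.
have [->|tx] := eqVneq (tr y x) 0; first by rewrite mul0r.
rewrite IH ?mulr0 //; move: (step_Yinf tx); rewrite hy.
by case: (Yinf R G x) => //= r; rewrite leNgt ltey.
Qed.

Variable v : V.

Lemma M2 : (Yinf R G v <= ETP G rho taus v)%E.
Proof.
have Htau := taus_strat.
rewrite /ETP; case: ifP => [/eqP hreach|]; last by rewrite leey.
have [->|vfin] := eqVneq (Yinf R G v) -oo%E; first by rewrite leNye.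
pose S := reachS G rho taus v.
have gS := reachS_good Hrho Htau hreach.
pose S' u := S u /\ Yinf R G u \is a fin_num.
have notinf : forall u, S u -> Yinf R G u != +oo%E.
  move=> u Su; apply/eqP => hu; have [k hk] := gS u Su.
  by move: hk; rewrite (Yinf_pinf_noreach k hu) ltxx.
have cS' : closedS G rho taus S'.
  move=> u x [Su fu] tx; split; first exact: (reachS_closed Hrho Htau Su tx).
  have Sx := reachS_closed Hrho Htau Su tx.
  rewrite fin_numE notinf // andbT; apply/eqP => hx.
  move: (step_Yinf tx); rewrite hx addeNy leeNy_eq => /eqP hu.
  by move: fu; rewrite hu.
have S'v : S' v.
  split; first exact: reachS_v.
  by rewrite fin_numE vfin notinf //; exact: reachS_v.
have gS' : forall u, S' u -> exists k, 0 < E (@tT R V G) u k.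
  by move=> u [Su _]; exact: gS.
pose f u := fine (Yinf R G u).
have stepf : forall u, S' u -> f u <= \sum_x tr u x * (wt R G u x + f x).
  move=> u Su; rewrite -[f u]mul1r -(tr_sum1 Hrho Htau u) mulr_suml.
  apply: ler_sum => x _.
  have [->|tx] := eqVneq (tr u x) 0; first by rewrite !mul0r.
  rewrite ler_wpM2l ?(tr_ge0 Hrho Htau) //.
  have [_ fx] := cS' u x Su tx.
  have [_ fu] := Su.
  by rewrite -lee_fin EFinD /f !fineK //; exact: step_Yinf.
have pg := pot_ge Hrho Htau cS' stepf.
pose Fm := \sum_x `|f x|.
have bnd : forall n, E f v n <= Fm * E (@nT R V G) v n.
  move=> n; rewrite -E_scale; apply: (E_le_on Hrho Htau cS') => // x Sx.
  rewrite /nT; have [xT|xT] := boolP (x \in Tg G).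
    by rewrite /f Yinf_T //= mulr0.
  rewrite mulr1 (le_trans (ler_norm _)) //.
  by apply: (@le_sum1 _ _ (fun x => `|f x|) x) => y.
have cvge := exp_cvg Hrho Htau cS' S'v gS'.
have le1 : f v <= limn (fun n => exp_trunc G rho taus v n).
  apply: (lim_ge_bound (m := fun n => E (@nT R V G) v n) (C := - Fm)) => //.
    exact: (nT_to0 Hrho Htau cS' S'v gS').
  move=> n; rewrite mulNr lerBlDr; apply: (le_trans (pg n v S'v)).
  by rewrite lerD2l bnd.
rewrite (EFin_lim cvge) -[Yinf R G v]fineK ?lee_fin //.
by case: S'v.
Qed.

End M2.

Definition minidx (P : pred nat) (N : nat) : nat := find P (iota 0 N.+1).

Lemma minidxP (P : pred nat) N : P N ->
  [/\ (minidx P N <= N)%N, P (minidx P N) & forall i, (i < minidx P N)%N -> ~~ P i].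
Proof.
move=> PN; have hs : has P (iota 0 N.+1).
  by apply/hasP; exists N => //; rewrite mem_iota add0n ltnSn.
have lt : (minidx P N < N.+1)%N by rewrite /minidx -[X in (_ < X)%N](size_iota 0) -has_find.
split; first by rewrite -ltnS.
  by have := nth_find 0 hs; rewrite nth_iota // add0n.
move=> i hi; have := before_find 0 hi; rewrite nth_iota ?add0n //.
  by move=> ->.
by apply: (ltn_trans hi).
Qed.

Lemma minidx_le (P : pred nat) N i : P N -> P i -> (minidx P N <= i)%N.
Proof.
move=> PN Pi; case: (minidxP PN) => _ _ h; rewrite leqNgt; apply/negP => /h.
by rewrite Pi.
Qed.

Section M3.
Variables (R : realType) (V : finType) (G : spg V) (J : nat).
Local Notation w x y := ((weight G x y)%:~R : R).
Local Notation Y := (Y R G).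

Definition DD (u : V) : bool := Y J u != +oo%E.
Definition rk (u : V) : nat := minidx (fun i => Y i u == Y J u) J.
Definition fr (u : V) : nat := minidx (fun i => Y i u != +oo%E) J.
Definition sig (u : V) : V := cY R G (rk u).-1 u.
Definition att (u : V) : V := cY R G (fr u).-1 u.

Lemma rkP u : [/\ (rk u <= J)%N, Y (rk u) u = Y J u & forall i, (i < rk u)%N -> Y i u != Y J u].
Proof. by case: (minidxP (P := fun i => Y i u == Y J u) (eqxx (Y J u))) => h1 /eqP h2 h3. Qed.

Lemma rk_T u : u \in Tg G -> rk u = 0%N.
Proof.
move=> uT; apply/eqP; rewrite -leqn0; apply: minidx_le => //.
by rewrite !Y_T.
Qed.

Lemma rk_pos u : DD u -> u \notin Tg G -> (0 < rk u)%N.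
Proof.
move=> Du uT; rewrite lt0n; apply/negP => /eqP r0.
case: (rkP u) => _ + _; rewrite r0 /= (negbTE uT) => h.
by move: Du; rewrite /DD -h eqxx.
Qed.

Lemma frP u : DD u -> [/\ (fr u <= J)%N, Y (fr u) u != +oo%E & forall i, (i < fr u)%N -> Y i u = +oo%E].
Proof.
move=> Du; case: (minidxP (P := fun i => Y i u != +oo%E) Du) => h1 h2 h3.
by split => // i /h3; rewrite negbK => /eqP.
Qed.

Lemma fr_pos u : DD u -> u \notin Tg G -> (0 < fr u)%N.
Proof.
move=> Du uT; rewrite lt0n; apply/negP => /eqP r0.
by case: (frP Du) => _ + _; rewrite r0 /= (negbTE uT).
Qed.

Lemma good_step u x : DD u -> u \notin Tg G ->
  (u \in VMin G -> x = sig u) -> (u \notin VMin G -> edge G u x) ->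
  [/\ DD x, ((w u x)%:E + Y J x <= Y J u)%E &
      ((w u x)%:E + Y J x = Y J u -> (rk x < rk u)%N)].
Proof.
move=> Du uT hM hX.
have rp := rk_pos Du uT.
case: (rkP u) => rJ hr _.
set j := (rk u).-1.
have ej : rk u = j.+1 by rewrite prednK.
have H : ((w u x)%:E + Y j x <= Y J u)%E.
  rewrite -hr ej; have [uM|uM] := boolP (u \in VMin G).
    by rewrite (hM uM) Y_S (negbTE uT) /sig -/j.
  exact: (Y_max R j uT uM (hX uM)).
have jJ : (j <= J)%N by rewrite -ltnS -ej (leq_trans (leqnSn _)) // ltnS -ej.
have hJj : (Y J x <= Y j x)%E := Y_monoN R G x jJ.
have H2 : ((w u x)%:E + Y J x <= Y J u)%E by apply: le_trans H; apply: leeD2l.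
split => //.
  rewrite /DD; apply/negP => /eqP hx; move: H2; rewrite hx addey // leye_eq => /eqP hu.
  by move: Du; rewrite /DD hu.
move=> heq; rewrite ej ltnS; apply: minidx_le => //=.
have : (Y j x <= Y J x)%E.
  rewrite -(leeD2lE (x := (w u x)%:E)) // heq; exact: H.
by move=> h; rewrite eq_le h hJj.
Qed.

Lemma att_step u : DD u -> u \notin Tg G -> u \in VMin G ->
  [/\ DD (att u), edge G u (att u) & (fr (att u) < fr u)%N].
Proof.
move=> Du uT uM; have fp := fr_pos Du uT.
case: (frP Du) => fJ hf _.
set j := (fr u).-1.
have ej : fr u = j.+1 by rewrite prednK.
have jJ : (j <= J)%N by rewrite -ltnS -ej (leq_trans (leqnSn _)) // ltnS -ej.
have hj : Y j (att u) != +oo%E.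
  move: hf; rewrite ej Y_S (negbTE uT) /att -/j.
  by apply: contra => /eqP ->; rewrite addey.
have Da : DD (att u).
  by apply: contra hj => /eqP h; move: (Y_monoN R G (att u) jJ); rewrite h leye_eq.
split => //; first exact: cY_edge.
by rewrite ej ltnS; exact: minidx_le Da hj.
Qed.

Lemma max_fr u x : DD u -> u \notin Tg G -> u \notin VMin G -> edge G u x ->
  (fr x < fr u)%N.
Proof.
move=> Du uT uM ex; have fp := fr_pos Du uT.
case: (frP Du) => fJ hf _.
set j := (fr u).-1.
have ej : fr u = j.+1 by rewrite prednK.
have hj : Y j x != +oo%E.
  move: hf; rewrite ej; apply: contra => /eqP h.
  by move: (Y_max R j uT uM ex); rewrite h addey // leye_eq.
have Dx : DD x.
  have hm : u \in VMin G -> x = sig u by move=> h; rewrite h in uM.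
  by case: (good_step Du uT hm (fun=> ex)).
by rewrite ej ltnS; apply: minidx_le.
Qed.

End M3.

Lemma int_le_m1 (R : realType) (z : int) : (z%:~R : R) <= 0 -> z != 0 -> (z%:~R : R) <= -1.
Proof.
rewrite -[0 : R](mulr0z 1) ler_int => z0 zn.
have : (z <= -1)%R by lia.
by rewrite -(ler_int R) => h; apply: le_trans h _; rewrite mulrN1z.
Qed.

Section M3b.
Variables (R : realType) (V : finType) (G : spg V) (J : nat) (γ : R).
Hypotheses (γ0 : 0 < γ) (γ1 : γ <= 1).
Local Notation w x y := ((weight G x y)%:~R : R).
Local Notation Y := (Y R G).
Local Notation DD := (DD R G J).
Local Notation rk := (rk R G J).
Local Notation sig := (sig R G J).
Local Notation att := (att R G J).

Definition zJ (u : V) : R := fine (Y J u).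
Definition dl : R := γ / (J.+1)%:R.
Definition Q (u : V) : R := zJ u + dl * (rk u)%:R.
Definition Qs : R := \sum_x `|Q x|.
Definition Ws : R := \sum_x \sum_y `|w x y|.
Definition Bb : R := Ws + Qs + Qs.
Definition eps : R := dl / (Bb + dl).
Definition rhoe (u x : V) : R := (1 - eps) * (x == sig u)%:R + eps * (x == att u)%:R.

Lemma dl_gt0 : 0 < dl.
Proof. by rewrite /dl divr_gt0 // ltr0n. Qed.

Lemma dl_J : dl * (J.+1)%:R <= 1.
Proof. by rewrite /dl mulfVK // pnatr_eq0. Qed.

Lemma Bb_ge0 : 0 <= Bb.
Proof.
rewrite /Bb /Ws /Qs !addr_ge0 ?sumr_ge0 // => x _.
by rewrite sumr_ge0.
Qed.

Lemma eps_gt0 : 0 < eps.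
Proof. by rewrite /eps divr_gt0 ?dl_gt0 // ltr_wpDl ?Bb_ge0 ?dl_gt0. Qed.

Lemma eps_le1 : eps <= 1.
Proof.
rewrite /eps ler_pdivrMr ?mul1r ?lerDr ?Bb_ge0 //.
by rewrite ltr_wpDl ?Bb_ge0 ?dl_gt0.
Qed.

Lemma eps_eq : eps * (Bb + dl) = dl.
Proof.
rewrite /eps mulfVK //; apply: lt0r_neq0.
by rewrite ltr_wpDl ?Bb_ge0 ?dl_gt0.
Qed.

Lemma rhoe_strat : ml_strat G (VMin G) rhoe.
Proof.
move=> u uM; have uT : u \notin Tg G.
  by apply/negP => hT; move: (T_notMin hT); rewrite uM.
have e0 := eps_gt0; have e1 := eps_le1.
split.
- move=> x; rewrite /rhoe addr_ge0 // mulr_ge0 ?ler0n //; first by rewrite subr_ge0.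
  exact: ltW.
- rewrite /rhoe big_split /= -!mulr_sumr.
  have h : forall y : V, \sum_(x : V) ((x == y)%:R : R) = 1.
    by move=> y; rewrite -[RHS](sum_ind y (fun=> (1:R))); apply: eq_bigr => x _; rewrite mulr1.
  by rewrite !h !mulr1 subrK.
- move=> x; rewrite /rhoe.
  have [->|xs] := eqVneq x (sig u); first by move=> _; exact: cY_edge.
  have [->|xa] := eqVneq x (att u); first by move=> _; exact: cY_edge.
  by rewrite !mulr0 addr0 eqxx.
Qed.

Lemma Q_T u : u \in Tg G -> Q u = 0.
Proof. by move=> uT; rewrite /Q /zJ Y_T // rk_T // mulr0 addr0. Qed.

Lemma zJ_E u : DD u -> (zJ u)%:E = Y J u.
Proof. by move=> Du; rewrite /zJ fineK // fin_numE Y_neq_ninf. Qed.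

Lemma zJ_int u : DD u -> exists z : int, zJ u = z%:~R.
Proof.
move=> Du; case: (Y_int R G J u) => [h|[z hz]]; first by move: Du; rewrite /DD h.
by exists z; rewrite /zJ hz.
Qed.

Lemma step_good u x : DD u -> u \notin Tg G ->
  (u \in VMin G -> x = sig u) -> (u \notin VMin G -> edge G u x) ->
  DD x /\ w u x + Q x <= Q u - dl.
Proof.
move=> Du uT hM hX; case: (good_step Du uT hM hX) => Dx H2 H3; split => //.
have [zu hu] := zJ_int Du; have [zx hx] := zJ_int Dx.
have le : w u x + zJ x <= zJ u by rewrite -lee_fin EFinD !zJ_E.
have rkx : (rk x <= J)%N by case: (rkP R G J x).
have d0 := dl_gt0; have dJ := dl_J.
have rJ : (rk x)%:R <= J%:R :> R by rewrite ler_nat.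
rewrite /Q.
have [eq|neq] := eqVneq (w u x + zJ x) (zJ u).
  have lt : (rk x < rk u)%N.
    by apply: H3; rewrite -zJ_E // -zJ_E // -EFinD eq.
  have : (rk x)%:R + 1 <= (rk u)%:R :> R by rewrite natr1 ler_nat.
  move=> h; have : dl * ((rk x)%:R + 1) <= dl * (rk u)%:R by rewrite ler_pM2l.
  by move: eq; lra.
have c : w u x + zJ x - zJ u <= -1.
  rewrite hu hx -intrD -intrB; apply: int_le_m1.
    by rewrite intrB intrD -hu -hx subr_le0.
  by apply: contra neq; rewrite subr_eq0 => /eqP e; rewrite hu hx -intrD e.
have r0 : 0 <= (rk u)%:R :> R by rewrite ler0n.
have : dl * (rk x)%:R <= dl * J%:R by rewrite ler_pM2l.
have : 0 <= dl * (rk u)%:R by rewrite mulr_ge0 // ltW.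
move: dJ; rewrite -natr1; lra.
Qed.

Lemma step_att u : w u (att u) + Q (att u) <= Q u + Bb.
Proof.
have hw : w u (att u) <= Ws.
  rewrite (le_trans (ler_norm _)) //.
  apply: (le_trans _ (@le_sum1 _ _ (fun x' => \sum_y `|w x' y|) u _)).
    by apply: (@le_sum1 _ _ (fun y => `|w u y|) (att u)).
  by move=> z; rewrite sumr_ge0.
have h1 : Q (att u) <= Qs.
  by rewrite (le_trans (ler_norm _)) //; apply: (@le_sum1 _ _ (fun x => `|Q x|) (att u)).
have h2 : - Q u <= Qs.
  rewrite (le_trans (ler_norm _)) // normrN.
  by apply: (@le_sum1 _ _ (fun x => `|Q x|) u).
rewrite /Bb; lra.
Qed.

End M3b.

Section M3c.
Variables (R : realType) (V : finType) (G : spg V) (J : nat) (γ : R).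
Hypotheses (γ0 : 0 < γ) (γ1 : γ <= 1).
Variable tau : V -> V -> R.
Hypothesis Htau : ml_strat G (VMax G) tau.
Local Notation w x y := ((weight G x y)%:~R : R).
Local Notation Y := (Y R G).
Local Notation DD := (DD R G J).
Local Notation sig := (sig R G J).
Local Notation att := (att R G J).
Local Notation fr := (fr R G J).
Local Notation rho := (rhoe G J γ).
Local Notation Q := (Q G J γ).
Local Notation eps := (eps G J γ).
Local Notation dl := (dl J γ).
Local Notation Bb := (Bb G J γ).
Let Hrho : ml_strat G (VMin G) rho := @rhoe_strat R V G J γ γ0.
Local Notation tr := (trans G rho tau).
Local Notation E := (E G rho tau).
Local Notation tT := (@tT R V G).
Local Notation nT := (@nT R V G).

Lemma tr_cases u x : u \notin Tg G -> tr u x != 0 ->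
  (u \in VMin G /\ (x = sig u \/ x = att u)) \/ (u \notin VMin G /\ edge G u x).
Proof.
move=> uT tx; have [uM|uM] := boolP (u \in VMin G).
  left; split => //; move: tx; rewrite /trans uM /rhoe.
  have [->|_] := eqVneq x (sig u); first by left.
  have [->|_] := eqVneq x (att u); first by right.
  by rewrite !mulr0 addr0 eqxx.
by right; split => //; exact: (tr_edge Hrho Htau uT tx).
Qed.

Lemma DD_closed : closedS G rho tau (fun u => DD u).
Proof.
move=> u x Du tx; have [uT|uT] := boolP (u \in Tg G).
  by move: tx; rewrite tr_T // pnatr_eq0 eqb0 negbK => /eqP <-.
case: (tr_cases uT tx) => [[uM [->|->]]|[uM ex]].
- by case: (good_step Du uT (fun=> erefl) (fun h => ltac:(by rewrite uM in h))).
- by case: (att_step Du uT uM).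
- by case: (@good_step _ _ _ _ _ x Du uT (fun h => ltac:(by rewrite h in uM)) (fun=> ex)).
Qed.

Lemma reach_lb i u : DD u -> (fr u <= i)%N -> eps ^+ i <= E tT u i.
Proof.
have e0 := eps_gt0 G J γ0; have e1 := eps_le1 G J γ0.
elim: i u => [|i IH] u Du fi.
  have uT : u \in Tg G.
    apply/negPn/negP => uT; move: (fr_pos Du uT); rewrite lt0n.
    by move: fi; rewrite leqn0 => ->.
  by rewrite E0 /tT uT expr0.
have [uT|uT] := boolP (u \in Tg G).
  by rewrite E_T // /tT uT exprn_ile1 // ltW.
rewrite ES.
have tge : forall x, 0 <= tr u x * E tT x i.
  by move=> x; rewrite mulr_ge0 ?(tr_ge0 Hrho Htau) ?(E_tT_ge0 Hrho Htau).
have [uM|uM] := boolP (u \in VMin G).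
  case: (att_step Du uT uM) => Da _ fa.
  apply: (le_trans _ (@le_sum1 _ _ (fun x => tr u x * E tT x i) (att u) tge)).
  rewrite exprS; apply: ler_pM.
  - exact: ltW.
  - by rewrite exprn_ge0 // ltW.
  - rewrite /trans uM /rhoe eqxx mulr1 lerDr mulr_ge0 ?ler0n //.
    by rewrite subr_ge0.
  - by apply: IH => //; rewrite -ltnS (leq_trans fa).
apply: (@le_trans _ _ (\sum_x tr u x * eps ^+ i)).
  by rewrite -mulr_suml (tr_sum1 Hrho Htau) mul1r exprS ler_piMl // exprn_ge0 // ltW.
apply: ler_sum => x _.
have [->|tx] := eqVneq (tr u x) 0; first by rewrite !mul0r.
rewrite ler_wpM2l ?(tr_ge0 Hrho Htau) //.
have ex : edge G u x by case: (tr_cases uT tx) => [[h _]|[_ h]] //; rewrite h in uM.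
have Dx : DD x.
  by case: (@good_step _ _ _ _ _ x Du uT (fun h => ltac:(by rewrite h in uM)) (fun=> ex)).
by apply: IH => //; rewrite -ltnS (leq_trans (max_fr Du uT uM ex)).
Qed.

Lemma DD_good u : DD u -> exists k, 0 < E tT u k.
Proof.
move=> Du; exists (fr u); apply: lt_le_trans (reach_lb Du (leqnn _)).
by rewrite exprn_gt0 // eps_gt0.
Qed.

Lemma pot_Q u : DD u -> \sum_x tr u x * (wt R G u x + Q x) <= Q u.
Proof.
move=> Du; have [uT|uT] := boolP (u \in Tg G).
  under eq_bigr do rewrite tr_T // /wt uT add0r eq_sym.
  by rewrite sum_ind.
have d0 := dl_gt0 J γ0.
under eq_bigr do rewrite /wt (negbTE uT).
have [uM|uM] := boolP (u \in VMin G).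
  under eq_bigr do rewrite /trans uM /rhoe mulrDl.
  rewrite big_split /=.
  under eq_bigr do rewrite mulrC mulrA.
  under [X in _ + X <= _]eq_bigr do rewrite mulrC mulrA.
  have h : forall (y : V) (F : V -> R), \sum_x F x * (x == y)%:R = F y.
    by move=> y F; rewrite -[RHS](sum_ind y F); apply: eq_bigr => x _; rewrite mulrC.
  rewrite (h (sig u) (fun x => (w u x + Q x) * (1 - eps))).
  rewrite (h (att u) (fun x => (w u x + Q x) * eps)).
  case: (step_good γ0 γ1 Du uT (fun=> erefl) (fun h => ltac:(by rewrite uM in h))) => _ hs.
  have ha := step_att G J γ u.
  have ee := eps_eq G J γ0; have e1 := eps_le1 G J γ0; have e0 := eps_gt0 G J γ0.
  have H1 : (w u (sig u) + Q (sig u)) * (1 - eps) <= (Q u - dl) * (1 - eps).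
    by rewrite ler_wpM2r // subr_ge0.
  have H2 : (w u (att u) + Q (att u)) * eps <= (Q u + Bb) * eps.
    by rewrite ler_wpM2r // ltW.
  apply: (le_trans (lerD H1 H2)).
  have -> : (Q u - dl) * (1 - eps) + (Q u + Bb) * eps = Q u - dl + eps * (Bb + dl) by ring.
  by rewrite ee subrK.
apply: (@le_trans _ _ (\sum_x tr u x * (Q u - dl))).
  apply: ler_sum => x _.
  have [->|tx] := eqVneq (tr u x) 0; first by rewrite !mul0r.
  rewrite ler_wpM2l ?(tr_ge0 Hrho Htau) //.
  have ex : edge G u x by case: (tr_cases uT tx) => [[h _]|[_ h]] //; rewrite h in uM.
  by case: (@step_good _ _ _ _ _ γ0 γ1 _ x Du uT (fun h => ltac:(by rewrite h in uM)) (fun=> ex)).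
by rewrite -mulr_suml (tr_sum1 Hrho Htau) mul1r gerBl ltW.
Qed.

Lemma M3_tau v : (ETP G rho tau v <= Y J v + γ%:E)%E.
Proof.
have [Dv|nDv] := boolP (DD v); last first.
  by move: nDv; rewrite negbK => /eqP ->; rewrite addye // leey.
have cS := DD_closed.
have gS : forall u, DD u -> exists k, 0 < E tT u k := DD_good.
rewrite /ETP (limn_reach Hrho Htau cS Dv gS) eqxx.
have cvge := exp_cvg Hrho Htau cS Dv gS.
have pl := pot_le Hrho Htau cS pot_Q.
have bnd : forall n, - (Qs G J γ * E nT v n) <= E Q v n.
  move=> n; rewrite -E_scale -E_opp; apply: (E_le_on Hrho Htau cS) => // x Dx.
  rewrite /nT; have [xT|xT] := boolP (x \in Tg G).
    by rewrite Q_T // mulr0 oppr0.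
  rewrite mulr1 lerNl (le_trans (ler_norm _)) // normrN.
  by apply: (@le_sum1 _ _ (fun x => `|Q x|) x).
have le1 : limn (fun n => exp_trunc G rho tau v n) <= Q v.
  apply: (lim_le_bound (m := fun n => E nT v n) (C := Qs G J γ)) => //.
    exact: (nT_to0 Hrho Htau cS Dv gS).
  move=> n; have := pl n v Dv; have := bnd n; lra.
rewrite (EFin_lim cvge) -zJ_E // -EFinD lee_fin (le_trans le1) //.
rewrite /Q lerD2l.
have rJ : ((rk R G J v)%:R : R) <= (J.+1)%:R.
  by rewrite ler_nat (leq_trans _ (leqnSn _)) //; case: (rkP R G J v).
apply: (le_trans (ler_wpM2l (ltW (dl_gt0 J γ0)) rJ)).
by rewrite /dl mulfVK // pnatr_eq0.
Qed.

End M3c.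

Theorem theorem6 (R : realType) (V : finType) (G : spg V) (v : V) :
  Val_d R G v = Val_m_upper R G v.
Proof.
have hA : (Val_d R G v <= Yinf R G v)%E.
  apply: le_ereal_inf_tmp => _ [J _ <-].
  apply: ge_ereal_inf; exists (Val_sigma R G (shor R G J v) v).
    by exists (shor R G J v) => //; exact: shor_strat.
  by apply: ge_ereal_sup => _ [t ht <-]; exact: TP_le_Y.
have hB : (Yinf R G v <= Val_d R G v)%E.
  apply: le_ereal_inf_tmp => _ [s hs <-].
  apply: le_ereal_sup_tmp; exists (TP R G (out G s (tst R G v) v)).
    by exists (tst R G v) => //; exact: tst_strat.
  exact: TP_ge_Yinf.
have hC : (Yinf R G v <= Val_m_upper R G v)%E.
  apply: le_ereal_inf_tmp => _ [rho hrho <-].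
  apply: le_ereal_sup_tmp; exists (ETP G rho (taus R G) v).
    by exists (taus R G) => //; exact: taus_strat.
  exact: M2.
have hD : (Val_m_upper R G v <= Yinf R G v)%E.
  apply: le_ereal_inf_tmp => _ [J _ <-].
  apply/lee_addgt0Pr => e e0.
  pose g := Num.min e 1.
  have g0 : 0 < g by rewrite lt_min e0 ltr01.
  have g1 : g <= 1 by rewrite ge_min lexx orbT.
  have ge : g <= e by rewrite ge_min lexx.
  apply: (@le_trans _ _ (Y R G J v + g%:E)%E); last by apply: leeD2l; rewrite lee_fin.
  apply: ge_ereal_inf; exists (Val_m_rho G (rhoe G J g) v).
    by exists (rhoe G J g) => //; exact: rhoe_strat.
  by apply: ge_ereal_sup => _ [tau htau <-]; exact: M3_tau.
by apply/eqP; rewrite eq_le (le_trans hA hC) (le_trans hD hB).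
Qed.
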